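(* In the staggered-adoption setting described in the context, suppose: (i) $\{Y_{it}(a,e),E_i,A_{it}\}_{t=1}^T$ are i.i.d. across $i$ for $(a,e)\in\{0,1\}\times\{1,\dots,T,\infty\}$; (ii) $Y_{it}(0,e)=Y_{it}(0,e')$ for $t<\min\{e,e'\}$; (iii) for all $t_1\ne t_2$ and all $e$, $\mathbb{E}[g(Y_{it_1}(0,\infty))-g(Y_{it_2}(0,\infty))\mid E_i=e]=\mathbb{E}[g(Y_{it_1}(0,\infty))-g(Y_{it_2}(0,\infty))\mid E_i=\infty]$; (iv) $0\le h(e,s)\le\pi(e,s)$; (v) $|\tau_g(e,s)|\le|\mu_g(e,t)|$. Fix a finite treatment date $e$, a post-treatment period $t\ge e$ and a chosen period $s<e$. Then $\mu_g(e,t)$ is partially identified via \[\mu_g(e,t)\in m_g(e,s,t)\left[\min\left\{1,\frac{1}{1-\operatorname{sgn}(\tau_g(e,s)\mu_g(e,t))\pi(e,s)}\right\},\ \max\left\{1,\frac{1}{1-\operatorname{sgn}(\tau_g(e,s)\mu_g(e,t))\pi(e,s)}\right\}\right],\] i.e. $\mu_g(e,t)=m_g(e,s,t)\,c$ for some $c$ in the displayed interval, where $m_g(e,s,t)=\mathbb{E}[g(Y_{it})-g(Y_{is})\mid E_i=e]-\mathbb{E}[g(Y_{it})-g(Y_{is})\mid E_i=\infty]$.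
   Context: Periods $t\in\{1,\dots,T\}$, units $i=1,\dots,n$. $E_i\in\{1,\dots,T,\infty\}$ is the date at which unit $i$ is first treated (staggered adoption: once treated, always treated), with $E_i=\infty$ meaning never treated. $A_{it}\in\{0,1\}$ is the unobserved anticipation status of unit $i$ in period $t$. Potential outcomes $Y_{it}(a,e)$; anticipation only matters before treatment of eventually-treated units, i.e. $Y_{it}(1,e)=Y_{it}(0,e)$ whenever $t\ge e$ or $e=\infty$. Observed outcome $Y_{it}=Y_{it}(A_{it},E_i)$. $g$ is a known measurable real function with finite expectations. Define $\mu_g(e,t)=\mathbb{E}[g(Y_{it}(0,e))-g(Y_{it}(0,\infty))\mid E_i=e]$, $h(e,s)=\mathbb{P}[A_{is}=1\mid E_i=e]$, and the anticipatory effect $\tau_g(e,s)=\mathbb{E}[g(Y_{is}(1,e))-g(Y_{is}(0,e))\mid E_i=e,A_{is}=1]$. $\pi(e,s)\in(0,1)$ is a given bound. $\operatorname{sgn}$ is the sign function. *)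

(* Defs.v *)
From HB Require Import structures.
From mathcomp Require Import all_boot all_order all_algebra.
From mathcomp Require Import all_classical all_reals all_analysis.
Set Implicit Arguments. Unset Strict Implicit. Unset Printing Implicit Defensive.
Import Order.TTheory GRing.Theory Num.Theory.
Import numFieldNormedType.Exports.
Local Open Scope classical_set_scope.
Local Open Scope ring_scope.

(* Adoption dates: [Some k] = first treated at period k, [None] = never (= oo). *)
Definition date := option nat.

Definition before (t : nat) (e : date) : bool :=
  match e with Some k => (t < k)%N | None => true end.

Definition date_in_range (T : nat) (e : date) : bool :=
  match e with Some k => (1 <= k <= T)%N | None => true end.

Section CondExp.
Context (d : measure_display) (Omega : measurableType d) (R : realType)
        (P : probability Omega R).

Definition cexp (X : Omega -> R) (B : set Omega) : R :=
  Rintegral P B X / fine (P B).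

Definition cprob (A B : set Omega) : R :=
  fine (P (A `&` B)) / fine (P B).
End CondExp.

Section Model.
Context (d : measure_display) (Omega : measurableType d) (R : realType)
        (P : probability Omega R)
        (Y : nat -> bool -> date -> Omega -> R)  (* Y t a e = Y_{it}(a,e) *)
        (E : Omega -> date)
        (A : nat -> Omega -> bool)
        (g : R -> R).

Definition event_E (e : date) : set Omega := [set w | E w = e].

Definition Yobs (t : nat) (w : Omega) : R := Y t (A t w) (E w) w.

Definition mu_g (e t : nat) : R :=
  cexp P (fun w => g (Y t false (Some e) w) - g (Y t false None w))
       (event_E (Some e)).

Definition h_ant (e s : nat) : R :=
  cprob P [set w | A s w] (event_E (Some e)).

Definition tau_g (e s : nat) : R :=
  cexp P (fun w => g (Y s true (Some e) w) - g (Y s false (Some e) w))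
       (event_E (Some e) `&` [set w | A s w]).

Definition m_g (e s t : nat) : R :=
  cexp P (fun w => g (Yobs t w) - g (Yobs s w)) (event_E (Some e))
  - cexp P (fun w => g (Yobs t w) - g (Yobs s w)) (event_E None).
End Model.

(* Main.v *)
Require Import Defs.
From HB Require Import structures.
From mathcomp Require Import all_boot all_order all_algebra.
From mathcomp Require Import all_classical all_reals all_analysis.
From mathcomp Require Import ring lra.
Import Order.TTheory GRing.Theory Num.Theory.
Import numFieldNormedType.Exports.
Local Open Scope classical_set_scope.
Local Open Scope ring_scope.

Lemma minmax_between (R : realDomainType) (a b c : R) :
  (a <= c <= b) \/ (b <= c <= a) -> Num.min a b <= c <= Num.max a b.
Proof.
case=> /andP[h1 h2]; apply/andP; split.
- by rewrite ge_min h1.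
- by rewrite le_max h2 orbT.
- by rewrite ge_min h1 orbT.
- by rewrite le_max h2.
Qed.

Lemma alg_bound (R : realFieldType) (M H Tau pi : R) : 0 < pi < 1 -> 0 <= H <= pi ->
  `|Tau| <= `|M| ->
  exists c, Num.min 1 (1 / (1 - Num.sg (Tau * M) * pi)) <= c
             <= Num.max 1 (1 / (1 - Num.sg (Tau * M) * pi))
   /\ M = (M - H * Tau) * c.
Proof.
move=> /andP[p0 p1] /andP[h0 h1] hT.
have [M0|M0] := eqVneq M 0.
  move: hT; rewrite M0 normr0 normr_le0 => /eqP ->.
  exists 1; split; last by ring.
  by apply: minmax_between; rewrite mulr0 sgr0 mul0r subr0 divr1 lexx; left.
have [T0|T0] := eqVneq Tau 0.
  exists 1; split; last by rewrite T0; ring.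
  by apply: minmax_between; rewrite T0 mul0r sgr0 mul0r subr0 divr1 lexx; left.
pose r := Tau / M.
have hr : `|r| <= 1.
  rewrite /r normrM normfV ler_pdivrMr ?normr_gt0 // mul1r //.
have r0 : r != 0 by rewrite /r mulf_neq0 // invr_eq0.
have sgE : Num.sg (Tau * M) = Num.sg r by rewrite /r !sgrM sgrV.
have TE : Tau = r * M by rewrite /r divfK.
rewrite sgE TE.
set D := 1 - H * r.
have mE : M - H * (r * M) = M * D by rewrite /D; ring.
rewrite mE.
have [rp|rn|rz] := ltgtP r 0; last first.
- by move: r0; rewrite rz eqxx.
- have ra : r <= 1 by move: hr; rewrite gtr0_norm.
  have Dl : D <= 1 by rewrite /D; nra.
  have Du : 1 - pi <= D by rewrite /D; nra.
  have D0 : 0 < D by lra.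
  exists D^-1; split; last by rewrite mulfK // gt_eqF.
  apply: minmax_between; left; rewrite gtr0_sg // !mul1r.
  rewrite invf_ge1 // Dl /= lef_pV2 ?posrE //; lra.
-
  have ra : -1 <= r by move: hr; rewrite ltr0_norm // => ?; lra.
  have Dl : 1 <= D by rewrite /D; nra.
  have Du : D <= 1 + pi by rewrite /D; nra.
  have D0 : 0 < D by lra.
  exists D^-1; split; last by rewrite mulfK // gt_eqF.
  apply: minmax_between; right; rewrite ltr0_sg // mulN1r opprK !mul1r.
  rewrite invf_le1 // Dl andbT lef_pV2 ?posrE //; lra.
Qed.

Theorem theoremA1 (R : realType) (d : measure_display) (Omega : measurableType d)
  (P : probability Omega R) (T : nat)
  (Y : nat -> bool -> date -> Omega -> R) (E : Omega -> date)
  (A : nat -> Omega -> bool) (g : R -> R) (pi : nat -> nat -> R)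
  (e t s : nat)
  (* measurability / finite expectations *)
  (hg : measurable_fun setT g)
  (hY : forall t' a e', measurable_fun setT (Y t' a e'))
  (hYint : forall t' a e', P.-integrable setT (fun w => (g (Y t' a e' w))%:E))
  (hEm : forall e', measurable (event_E E e'))
  (hAm : forall t', measurable [set w | A t' w])
  (* E_i takes values in {1,...,T,oo} *)
  (hErange : forall w, date_in_range T (E w))
  (* anticipation only matters before treatment of eventually-treated units *)
  (hant : forall t' e' w, (1 <= t')%N -> (t' <= T)%N -> (~~ before t' e' \/ e' = None) ->
            Y t' true e' w = Y t' false e' w)
  (* conditioning events have positive probability *)
  (hPe : (0 < P (event_E E (Some e)))%E)
  (hPinf : (0 < P (event_E E None))%E)
  (* (ii) no differential pre-trends in untreated potential outcomes *)
  (hnoant : forall t' e1 e2 w, (1 <= t')%N -> (t' <= T)%N ->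
            before t' e1 -> before t' e2 -> Y t' false e1 w = Y t' false e2 w)
  (* (iii) parallel trends *)
  (hpt : forall t1 t2 e', (1 <= t1 <= T)%N -> (1 <= t2 <= T)%N -> t1 <> t2 ->
         date_in_range T e' -> (0 < P (event_E E e'))%E ->
         cexp P (fun w => g (Y t1 false None w) - g (Y t2 false None w)) (event_E E e')
         = cexp P (fun w => g (Y t1 false None w) - g (Y t2 false None w)) (event_E E None))
  (* pi(e,s) in (0,1) *)
  (hpi : 0 < pi e s < 1)
  (* (iv) *)
  (hh : 0 <= h_ant P E A e s <= pi e s)
  (* (v) *)
  (htau : `|tau_g P Y E A g e s| <= `|mu_g P Y E g e t|)
  (* fixed e finite, s < e <= t, all in {1,...,T} *)
  (he : (1 <= e <= T)%N) (ht : (e <= t <= T)%N) (hs : (1 <= s)%N) (hse : (s < e)%N) :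
  let k := 1 / (1 - Num.sg (tau_g P Y E A g e s * mu_g P Y E g e t) * pi e s) in
  exists c : R, Num.min 1 k <= c <= Num.max 1 k /\
    mu_g P Y E g e t = m_g P Y E A g e s t * c.
Proof.
move=> k.
set Ee := event_E E (Some e). set Ei := event_E E None. set As := [set w | A s w].
have mEe : measurable Ee := hEm _.
have mEi : measurable Ei := hEm _.
have mAs : measurable As := hAm _.
have iG : forall t' a e' D, measurable D ->
    P.-integrable D (EFin \o (fun w => g (Y t' a e' w))).
  by move=> t' a e' D mD; apply: (integrableS measurableT) (hYint t' a e').
have iB : forall t1 a1 e1 t2 a2 e2 D, measurable D ->
    P.-integrable D (EFin \o (fun w => g (Y t1 a1 e1 w) - g (Y t2 a2 e2 w))).
  move=> t1 a1 e1 t2 a2 e2 D mD.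
  apply: (eq_integrable mD _ _ _ (integrableB mD (iG t1 a1 e1 D mD) (iG t2 a2 e2 D mD))).
  by move=> x _ /=; rewrite EFinB.
have sT : (s <= T)%N by apply: leq_trans (ltnW hse) _; case/andP: he.
have tT : (t <= T)%N by case/andP: ht.
have t1 : (1 <= t)%N by apply: leq_trans _ (proj1 (andP ht)); case/andP: he.
have hets : ~~ before t (Some e) by rewrite /= -leqNgt; case/andP: ht.
pose f := fun w => g (Y s true (Some e) w) - g (Y s false (Some e) w).
have pw : {in Ee, (fun w => g (Yobs Y E A t w) - g (Yobs Y E A s w)) =1
   (fun w => (g (Y t false (Some e) w) - g (Y t false None w))
            + (g (Y t false None w) - g (Y s false None w)) - (f \_ As) w)}.
  move=> w; rewrite inE /Ee /event_E /= => Ew.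
  rewrite /Yobs Ew.
  have -> : Y t (A t w) (Some e) w = Y t false (Some e) w.
    by case: (A t w) => //; apply: hant => //; left.
  rewrite (hnoant s None (Some e) w) //.
  rewrite patchE /f /As; case: ifPn => [|].
    rewrite inE /= => ->; ring.
  rewrite notin_setE /= => /negP/negbTE ->; rewrite (_ : point = 0 :> R) //; ring.
have iD : forall (u v : Omega -> R) D, measurable D ->
    P.-integrable D (EFin \o u) -> P.-integrable D (EFin \o v) ->
    P.-integrable D (EFin \o (fun w => u w + v w)).
  move=> u v D mD iu iv.
  apply: (eq_integrable mD _ _ _ (integrableD mD iu iv)).
  by move=> x _ /=; rewrite EFinD.
have mEA : measurable (Ee `&` As) by apply: measurableI.
have ifA : P.-integrable Ee (EFin \o (f \_ As)).
  rewrite -restrict_EFin; apply/(integrable_restrict P mAs mEe).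
  exact: iB.
have int_obs : Rintegral P Ee (fun w => g (Yobs Y E A t w) - g (Yobs Y E A s w))
   = Rintegral P Ee (fun w => g (Y t false (Some e) w) - g (Y t false None w))
   + Rintegral P Ee (fun w => g (Y t false None w) - g (Y s false None w))
   - Rintegral P (Ee `&` As) f.
  rewrite (eq_Rintegral P pw).
  rewrite (RintegralB mEe (iD _ _ _ mEe (iB t false (Some e) t false None Ee mEe) (iB t false None s false None Ee mEe)) ifA).
  rewrite (RintegralD mEe (iB t false (Some e) t false None Ee mEe) (iB t false None s false None Ee mEe)).
  by rewrite Rintegral_mkcondr.
have fin : forall X, measurable X -> P X = (fine (P X))%:E.
  by move=> X mX; rewrite fineK // fin_num_measure.
have pe0 : 0 < fine (P Ee).
  by rewrite -lte_fin -fin.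
have htauE : h_ant P E A e s * tau_g P Y E A g e s
    = Rintegral P (Ee `&` As) f / fine (P Ee).
  rewrite /h_ant /tau_g /cprob /cexp -/Ee -/As setIC.
  have [z|nz] := eqVneq (fine (P (Ee `&` As))) 0.
    have P0 : P (Ee `&` As) = 0%E by rewrite fin // z.
    rewrite z /Rintegral null_set_integral //=; first by rewrite !mul0r.
    by apply: (measurable_int P); exact: iB.
  by field; rewrite nz gt_eqF.
have c1 : (1 <= t <= T)%N by rewrite t1 tT.
have c2 : (1 <= s <= T)%N by rewrite hs sT.
have tsne : t <> s.
  by move=> ts; have := leq_trans hse (proj1 (andP ht)); rewrite ts ltnn.
have hptE := hpt t s (Some e) c1 c2 tsne he hPe.
have hEi : cexp P (fun w => g (Yobs Y E A t w) - g (Yobs Y E A s w)) Ei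
         = cexp P (fun w => g (Y t false None w) - g (Y s false None w)) Ei.
  rewrite /cexp; congr (_ / _); apply: eq_Rintegral => w.
  rewrite inE /Ei /event_E /= => Ew; rewrite /Yobs Ew.
  have H1 : forall t' a, (1 <= t')%N -> (t' <= T)%N -> Y t' a None w = Y t' false None w.
    by move=> t' [] // ? ?; apply: hant => //; right.
  by rewrite (H1 t) // (H1 s).
have hm : m_g P Y E A g e s t = mu_g P Y E g e t - h_ant P E A e s * tau_g P Y E A g e s.
  rewrite /m_g -/Ee -/Ei hEi -hptE htauE /mu_g -/Ee /cexp int_obs.
  by field; rewrite gt_eqF.
rewrite /k hm; exact: alg_bound.
Qed.
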